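(* Assume $0<\beta\le\alpha<\sqrt n$ and $e\in\mathbb{R}^n$ satisfies $\|e\|=\sqrt n$. For every point $\bar s\in K_e(\beta)^*$, the cone $K_e(\alpha)^*$ contains the open ball $B(\bar s,r)=\{s:\|s-\bar s\|<r\}$, where \[ r=\frac1n\|\bar s\|\Big(\alpha\sqrt{n-\beta^2}-\beta\sqrt{n-\alpha^2}\Big). \]
   Context: $\mathbb{R}^n$ carries the dot product and Euclidean norm. For $0<\gamma<\sqrt n$, $K_e(\gamma)=\{x:e^Tx\ge\gamma\|x\|\}$ and $K_e(\gamma)^*=\{s:x^Ts\ge0\ \forall x\in K_e(\gamma)\}=\{s:e^Ts\ge\sqrt{n-\gamma^2}\|s\|\}$. *)

(* Defs.v *)
From HB Require Import structures.
From mathcomp Require Import all_boot all_order all_algebra.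
Set Implicit Arguments. Unset Strict Implicit. Unset Printing Implicit Defensive.
Import Order.TTheory GRing.Theory Num.Theory.
Local Open Scope ring_scope.

Definition dotv (R : rcfType) (n : nat) (x y : 'rV[R]_n) : R :=
  \sum_(i < n) x 0 i * y 0 i.

Definition enorm (R : rcfType) (n : nat) (x : 'rV[R]_n) : R :=
  Num.sqrt (dotv x x).

Definition Kcone (R : rcfType) (n : nat) (e : 'rV[R]_n) (gamma : R)
  (x : 'rV[R]_n) : Prop := gamma * enorm x <= dotv e x.

Definition dual_cone (R : rcfType) (n : nat) (K : 'rV[R]_n -> Prop)
  (s : 'rV[R]_n) : Prop := forall x, K x -> 0 <= dotv x s.

(* Main.v *)
Require Import Defs.
From HB Require Import structures.
From mathcomp Require Import all_boot all_order all_algebra.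
From mathcomp Require Import ring lra.
Import Order.TTheory GRing.Theory Num.Theory.
Local Open Scope ring_scope.

Section Aux.
Variables (R : rcfType) (n : nat).
Implicit Types (x y z : 'rV[R]_n) (c : R).

Lemma dotvC x y : dotv x y = dotv y x.
Proof. by rewrite /dotv; apply: eq_bigr => i _; rewrite mulrC. Qed.

Lemma dotvDl x y z : dotv (x + y) z = dotv x z + dotv y z.
Proof. by rewrite /dotv -big_split; apply: eq_bigr => i _; rewrite mxE mulrDl. Qed.

Lemma dotvZl c x z : dotv (c *: x) z = c * dotv x z.
Proof. by rewrite /dotv mulr_sumr; apply: eq_bigr => i _; rewrite mxE mulrA. Qed.

Lemma dotvNl x z : dotv (- x) z = - dotv x z.
Proof. by rewrite /dotv -sumrN; apply: eq_bigr => i _; rewrite mxE mulNr. Qed.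

Lemma dotvDr x y z : dotv z (x + y) = dotv z x + dotv z y.
Proof. by rewrite dotvC dotvDl !(dotvC z). Qed.

Lemma dotvZr c x z : dotv z (c *: x) = c * dotv z x.
Proof. by rewrite dotvC dotvZl dotvC. Qed.

Lemma dotvNr x z : dotv z (- x) = - dotv z x.
Proof. by rewrite dotvC dotvNl dotvC. Qed.

Lemma dotv_ge0 x : 0 <= dotv x x.
Proof. by apply: sumr_ge0 => i _; rewrite -expr2 sqr_ge0. Qed.

Lemma dotv0 x y : dotv y y = 0 -> dotv x y = 0.
Proof.
move=> h; rewrite /dotv big1 // => i _.
have hge : forall j : 'I_n, true -> 0 <= y 0 j * y 0 j.
  by move=> j _; rewrite -expr2 sqr_ge0.
have /eqP := psumr_eq0P hge h (i := i) isT.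
by rewrite mulf_eq0 orbb => /eqP ->; rewrite mulr0.
Qed.

Lemma enorm_sqr x : enorm x ^+ 2 = dotv x x.
Proof. by rewrite /enorm sqr_sqrtr // dotv_ge0. Qed.

Lemma enorm_ge0 x : 0 <= enorm x.
Proof. exact: sqrtr_ge0. Qed.

Lemma CS2 x y : dotv x y ^+ 2 <= dotv x x * dotv y y.
Proof.
have hyy := dotv_ge0 y.
case: (ltrgt0P (dotv y y)) => [hp|hn|h0]; last first.
- by rewrite (dotv0 x y h0) h0 expr0n mulr0.
- by move: hyy; rewrite leNgt hn.
set u := dotv y y *: x - dotv x y *: y.
have hu := dotv_ge0 u.
have e1 : dotv u u = dotv y y * (dotv y y * dotv x x - dotv x y ^+ 2).
  rewrite /u !(dotvDl, dotvDr, dotvNl, dotvNr, dotvZl, dotvZr) (dotvC y x); ring.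
rewrite e1 in hu.
have : 0 <= dotv y y * dotv x x - dotv x y ^+ 2 by rewrite -(pmulr_rge0 _ hp).
lra.
Qed.

Lemma CS x y : - (enorm x * enorm y) <= dotv x y.
Proof.
have h := CS2 x y. rewrite -!enorm_sqr in h.
have h1 := enorm_ge0 x. have h2 := enorm_ge0 y.
have h3 : 0 <= enorm x * enorm y by rewrite mulr_ge0.
nra.
Qed.

End Aux.

Theorem lemma5p4 (R : rcfType) (n : nat) (alpha beta : R) (e : 'rV[R]_n)
  (hb0 : 0 < beta) (hba : beta <= alpha) (han : alpha < Num.sqrt n%:R)
  (he : enorm e = Num.sqrt n%:R)
  (sbar : 'rV[R]_n) (hs : dual_cone (Kcone e beta) sbar) :
  let r := (n%:R)^-1 * enorm sbar *
           (alpha * Num.sqrt (n%:R - beta ^+ 2) - beta * Num.sqrt (n%:R - alpha ^+ 2)) in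
  forall s : 'rV[R]_n, enorm (s - sbar) < r -> dual_cone (Kcone e alpha) s.
Proof.
move=> r0 s hsr x hx.
set nR : R := n%:R.
set N : R := Num.sqrt nR.
set Sa : R := Num.sqrt (nR - alpha ^+ 2).
set Sb : R := Num.sqrt (nR - beta ^+ 2).
have hsr' : enorm (s - sbar) < nR^-1 * enorm sbar * (alpha * Sb - beta * Sa) by exact: hsr.
clear hsr; rename hsr' into hsr; clear r0.
have han' : alpha < N by exact: han.
have he' : enorm e = N by exact: he.
clear han he; rename han' into han; rename he' into he.
have hnR0 : 0 <= nR by rewrite /nR ler0n.
clearbody nR.
have hN2 : N ^+ 2 = nR by rewrite sqr_sqrtr.
have hNp : 0 < N by lra.
have hnp : 0 < nR by rewrite -hN2 exprn_gt0.
have hee : dotv e e = nR by rewrite -enorm_sqr he.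
have ha2 : alpha ^+ 2 <= nR.
  rewrite -hN2 !expr2. have : 0 < (N - alpha) * (N + alpha) by rewrite mulr_gt0 //; lra.
  nra.
have hb2 : beta ^+ 2 <= nR by move: ha2; rewrite !expr2; nra.
have hSa2 : Sa ^+ 2 = nR - alpha ^+ 2 by rewrite sqr_sqrtr // subr_ge0.
have hSb2 : Sb ^+ 2 = nR - beta ^+ 2 by rewrite sqr_sqrtr // subr_ge0.
have hSa0 : 0 <= Sa by apply: sqrtr_ge0.
have hSb0 : 0 <= Sb by apply: sqrtr_ge0.
set a0 : R := dotv e sbar.
set p := sbar - (a0 / nR) *: e.
have hnR0' : nR != 0 by rewrite gt_eqF.
have hep : dotv e p = 0.
  rewrite /p !(dotvDr, dotvNr, dotvZr) hee -/a0; by rewrite divfK // subrr.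
have hpe : dotv p e = 0 by rewrite dotvC.
set Y : R := enorm sbar.
set r := nR^-1 * Y * (alpha * Sb - beta * Sa).
have hY2 : Y ^+ 2 = dotv sbar sbar by rewrite enorm_sqr.
have hY0 : 0 <= Y by apply: enorm_ge0.
have hpp : dotv p p = Y ^+ 2 - a0 ^+ 2 / nR.
  rewrite hY2 /p !(dotvDl, dotvDr, dotvNl, dotvNr, dotvZl, dotvZr) hee. rewrite [dotv sbar e]dotvC -/a0.
  by field.
have hps : dotv p sbar = dotv p p.
  rewrite /p !(dotvDl, dotvDr, dotvNl, dotvNr, dotvZl, dotvZr) hee [dotv sbar e]dotvC -/a0.
  by field.
have hpdef : p = sbar - (a0 / nR) *: e by [].
clearbody p.
set w : R := Num.sqrt (dotv p p).
have hw2 : w ^+ 2 = dotv p p by rewrite sqr_sqrtr // dotv_ge0.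
have hw0 : 0 <= w by apply: sqrtr_ge0.
have ha0 : 0 <= a0.
  apply: hs; rewrite /Kcone he hee -hN2; nra.
set x1 := (beta * w) *: e - (N * Sb) *: p.
have hx1x1 : dotv x1 x1 = (nR * w) ^+ 2.
  rewrite /x1 !(dotvDl, dotvDr, dotvNl, dotvNr, dotvZl, dotvZr) hee hep hpe -hw2.
  have -> : N * Sb * - (N * Sb * w ^+ 2) = - (N ^+ 2 * Sb ^+ 2 * w ^+ 2) by ring.
  rewrite hN2 hSb2; ring.
have hnx1 : enorm x1 = nR * w.
  by rewrite /enorm hx1x1 sqrtr_sqr ger0_norm // mulr_ge0 // ltW.
have key1 : 0 <= dotv x1 sbar.
  apply: hs; rewrite /Kcone hnx1 /x1 !(dotvDr, dotvNr, dotvZr) hee hep.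
  rewrite mulr0 subr0; rewrite le_eqVlt; apply/orP; left; apply/eqP; ring.
move: key1; rewrite /x1 !(dotvDl, dotvNl, dotvZl) -/a0 hps -hw2 => key1.
have hYa : nR * Y ^+ 2 = a0 ^+ 2 + nR * w ^+ 2.
  rewrite hw2 hpp; by field.
have hwb : N * w <= beta * Y.
  have h1 : Sb * N * w <= beta * a0.
    have k2 : 0 <= w * (beta * a0 - N * Sb * w).
      by rewrite (_ : _ * _ = beta * w * a0 - N * Sb * w ^+ 2) //; ring.
    move: hw0; rewrite le0r => /orP [/eqP -> | hwp]; first by rewrite mulr0 mulr_ge0 // ltW.
    move: k2; rewrite pmulr_rge0 // => hh; lra.
  have h2 : (N * w) ^+ 2 <= (beta * Y) ^+ 2.
    have h3 : (Sb * N * w) ^+ 2 <= (beta * a0) ^+ 2.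
      by rewrite ler_pXn2r // ?nnegrE ?mulr_ge0 // ltW.
    rewrite !exprMn hSb2 hN2 in h3; rewrite !exprMn hN2.
    have e1 : beta ^+ 2 * a0 ^+ 2 = beta ^+ 2 * (nR * Y ^+ 2) - beta ^+ 2 * (nR * w ^+ 2).
      by rewrite hYa; ring.
    have : nR * (nR * w ^+ 2) <= nR * (beta ^+ 2 * Y ^+ 2).
      have e2 : (nR - beta ^+ 2) * nR * w ^+ 2 = nR * (nR * w ^+ 2) - beta ^+ 2 * (nR * w ^+ 2) by ring.
      have e3 : nR * (beta ^+ 2 * Y ^+ 2) = beta ^+ 2 * (nR * Y ^+ 2) by ring.
      lra.
    by rewrite ler_pM2l.
  by rewrite -(ler_pXn2r (_ : (0 < 2)%N)) // nnegrE mulr_ge0 // ltW.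
have haY : Sb * Y <= a0.
  have h2 : (Sb * Y) ^+ 2 <= a0 ^+ 2.
    rewrite exprMn hSb2.
    have : (N * w) ^+ 2 <= (beta * Y) ^+ 2.
      by rewrite ler_pXn2r // nnegrE mulr_ge0 // ltW.
    rewrite !exprMn hN2; nra.
  by rewrite -(ler_pXn2r (_ : (0 < 2)%N)) // nnegrE mulr_ge0.
move: hx; rewrite /Kcone => hx.
set b0 : R := dotv e x.
set X : R := enorm x.
have hX0 : 0 <= X by apply: enorm_ge0.
have hX2 : X ^+ 2 = dotv x x by rewrite enorm_sqr.
set px := x - (b0 / nR) *: e.
have hpxpx : dotv px px = X ^+ 2 - b0 ^+ 2 / nR.
  rewrite hX2 /px !(dotvDl, dotvDr, dotvNl, dotvNr, dotvZl, dotvZr) hee [dotv x e]dotvC -/b0.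
  by field.
have hxs : dotv x sbar = a0 * b0 / nR + dotv px p.
  rewrite /px hpdef !(dotvDl, dotvDr, dotvNl, dotvNr, dotvZl, dotvZr) hee [dotv x e]dotvC -/b0 -/a0.
  by field.
have hpxdef : px = x - (b0 / nR) *: e by [].
clearbody px.
set v : R := enorm px.
have hv2 : v ^+ 2 = dotv px px by rewrite enorm_sqr.
have hv0 : 0 <= v by apply: enorm_ge0.
have hb0x : alpha * X <= b0 by [].
have hvb : N * v <= Sa * X.
  have : (N * v) ^+ 2 <= (Sa * X) ^+ 2.
    rewrite !exprMn hN2 hSa2 hv2 hpxpx.
    have hal0 : 0 <= alpha * X by rewrite mulr_ge0 //; lra.
    have : (alpha * X) ^+ 2 <= b0 ^+ 2 by rewrite ler_pXn2r // nnegrE; lra.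
    rewrite exprMn => hh.
    rewrite (_ : nR * (X ^+ 2 - b0 ^+ 2 / nR) = nR * X ^+ 2 - b0 ^+ 2); last by field.
    lra.
  by rewrite ler_pXn2r // nnegrE mulr_ge0 // ltW.
have hcs : - (v * w) <= dotv px p by apply: CS.
have hmain : r * X <= dotv x sbar.
  rewrite hxs /r -/Y -/Sb -/Sa.
  have hv1 : v * w * nR <= Sa * X * beta * Y.
    rewrite -hN2 (_ : v * w * N ^+ 2 = (N * v) * (N * w)); last by ring.
    rewrite (_ : Sa * X * beta * Y = (Sa * X) * (beta * Y)); last by ring.
    by apply: ler_pM; rewrite ?mulr_ge0 // ltW.
  have hab : alpha * X * (Sb * Y) <= b0 * a0.
    apply: ler_pM => //; rewrite ?mulr_ge0 //; lra.
  rewrite -[_ <= _](ler_pM2r hnp).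
  rewrite mulrDl (_ : a0 * b0 / nR * nR = b0 * a0); last by field.
  rewrite (_ : nR^-1 * Y * (alpha * Sb - beta * Sa) * X * nR =
     alpha * X * (Sb * Y) - Sa * X * beta * Y); last by field.
  have : - (v * w) * nR <= dotv px p * nR by rewrite ler_pM2r.
  lra.
have hsplit : s = sbar + (s - sbar) by rewrite addrC subrK.
rewrite hsplit dotvDr.
have hc := CS R n x (s - sbar).
have : X * enorm (s - sbar) <= X * r by rewrite ler_wpM2l // ltW.
rewrite -/X in hc; lra.
Qed.
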